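(* Let $k\geq 4$ be fixed. Then, as $n\to\infty$, \[ \frac{2n}{k}+O(1) \;\ge\; \mathrm{wsat}_k(n,B_k) \;\ge\; \frac{2n}{k+O(1)}, \] where the $O(1)$ terms denote quantities bounded in absolute value by constants independent of $n$. That is, there are constants $C_1, C_2$ (independent of $n$) such that for all sufficiently large $n$, $\frac{2n}{k+C_2}\le \mathrm{wsat}_k(n,B_k)\le \frac{2n}{k}+C_1$.
   Context: A $k$-uniform hypergraph $H$ has a vertex set $V(H)$ and a set $E(H)$ of $k$-element subsets of $V(H)$ (hyperedges). The bow tie $B_k$ is the $k$-uniform hypergraph with $2k-1$ vertices and two hyperedges sharing exactly one vertex; thus a $k$-uniform hypergraph contains a copy of $B_k$ iff two of its hyperedges intersect in exactly one vertex. A $k$-uniform hypergraph $H$ on $n$ vertices is $B_k$-semi-saturated if for every $k$-subset $e\subseteq V(H)$ with $e\notin E(H)$, adding $e$ creates a new copy of $B_k$ (containing $e$), i.e. there is a hyperedge $f\in E(H)$ with $|e\cap f|=1$; $H$ itself need not be $B_k$-free. The semi-saturation number $\mathrm{wsat}_k(n,B_k)$ is the minimum number of hyperedges of an $n$-vertex $k$-uniform $B_k$-semi-saturated hypergraph. *)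

(* Defs.v *)
From mathcomp Require Import all_boot all_order all_algebra.
Set Implicit Arguments. Unset Strict Implicit. Unset Printing Implicit Defensive.

Definition kuniform (k n : nat) (E : {set {set 'I_n}}) : bool :=
  [forall f in E, #|f| == k].

(* B_k-semi-saturated: every k-subset e not in E meets some edge f in exactly
   one vertex (so adding e creates a new bow tie containing e). *)
Definition Bk_semisat (k n : nat) (E : {set {set 'I_n}}) : bool :=
  [forall e : {set 'I_n}, ((#|e| == k) && (e \notin E)) ==>
     [exists f in E, #|e :&: f| == 1]].

Definition complete_kgraph (k n : nat) : {set {set 'I_n}} :=
  [set e : {set 'I_n} | #|e| == k].

(* The default value is the size of the
   complete k-graph, which is itself a candidate, so this is the true minimum. *)
Definition wsat_Bk (k n : nat) : nat :=
  \big[minn/#|complete_kgraph k n|]_(E : {set {set 'I_n}} |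
        kuniform k E && Bk_semisat k E) #|E|.

(* Main.v *)
Require Import Defs.
From mathcomp Require Import all_boot.
From mathcomp Require Import zify.
Set Implicit Arguments. Unset Strict Implicit. Unset Printing Implicit Defensive.

Definition touches (V W : finType) (src dst : W -> V) (y : W) (v : V) : bool :=
  (src y == v) || (dst y == v).
Definition gdeg (V W : finType) (src dst : W -> V) (S : {set W}) (v : V) : nat :=
  #|[set y in S | touches src dst y v]|.
Definition Q1 (V W : finType) (src dst : W -> V) g :=
  forall S : {set W}, 0 < #|S| <= g -> exists v, gdeg src dst S v = 1.
Definition Q2 (V W : finType) (src dst : W -> V) g :=
  forall S : {set W}, 0 < #|S| <= g -> 1 < #|[set v | gdeg src dst S v == 1]|.
Definition loopless (V W : finType) (src dst : W -> V) := forall y, src y != dst y.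
Definition regk (V W : finType) (src dst : W -> V) k :=
  forall v, #|[set y | touches src dst y v]| = k.

Lemma Q2Q1 (V W : finType) (src dst : W -> V) g : Q2 src dst g -> Q1 src dst g.
Proof.
move=> q S HS; have := q S HS => /card_gt1P [x [y [Hx _ _]]].
by exists x; move: Hx; rewrite inE => /eqP.
Qed.

Lemma Q2mono (V W : finType) (src dst : W -> V) g g' :
  g <= g' -> Q2 src dst g' -> Q2 src dst g.
Proof. move=> le q S /andP [H1 H2]; apply: q; rewrite H1 /=; exact: leq_trans H2 le. Qed.

Lemma eqset (T : finType) (A B : {set T}) : A = B -> forall x, (x \in A) = (x \in B).
Proof. by move=> ->. Qed.

Lemma two_in (T : finType) (A : {set T}) x y : x \in A -> y \in A -> x != y -> 1 < #|A|.
Proof. by move=> Hx Hy Hxy; apply/card_gt1P; exists x, y. Qed.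

Definition tog (W : finType) (X : {set W}) (y : W) : {set W} :=
  if y \in X then X :\ y else y |: X.

Lemma tog_in (W : finType) (X : {set W}) y z :
  (z \in tog X y) = (if z == y then ~~ (y \in X) else z \in X).
Proof.
rewrite /tog; case: (eqVneq z y) => [->|Hzy]; case: (boolP (y \in X)) => Hy;
  rewrite ?inE ?eqxx ?Hy ?(negbTE Hzy) //.
Qed.

Lemma togK (W : finType) (y : W) : cancel (fun X : {set W} => tog X y) (fun X => tog X y).
Proof.
move=> X; apply/setP => z; rewrite !tog_in; case: (eqVneq z y) => [->|//].
by rewrite eqxx negbK.
Qed.


Definition csrc (V W : finType) (src : W -> V) (c : W * {set W}) : V * {set W} :=
  (src c.1, c.2).
Definition cdst (V W : finType) (dst : W -> V) (c : W * {set W}) : V * {set W} :=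
  (dst c.1, tog c.2 c.1).

Lemma c_loopless (V W : finType) (src dst : W -> V) :
  loopless src dst -> loopless (csrc src) (cdst dst).
Proof. by move=> nl c; rewrite /csrc /cdst xpair_eqE negb_and nl. Qed.

Lemma c_uniq (V W : finType) (src dst : W -> V) c c' p :
  loopless src dst -> c.1 = c'.1 ->
  touches (csrc src) (cdst dst) c p -> touches (csrc src) (cdst dst) c' p -> c = c'.
Proof.
case: c => y X; case: c' => y' X' nl /= Hy; subst y'.
rewrite /touches /csrc /cdst /=.
case/orP => /eqP <-; rewrite !xpair_eqE; case/orP => /andP [/eqP E1 /eqP E2].
- by rewrite E2.
- by have := nl y; rewrite E1 eqxx.
- by have := nl y; rewrite E1 eqxx.
- by move: E2 => /(can_inj (@togK _ y)) ->.
Qed.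

Lemma c_touch_fst (V W : finType) (src dst : W -> V) c p :
  touches (csrc src) (cdst dst) c p -> touches src dst c.1 p.1.
Proof. by rewrite /touches /csrc /cdst; case/orP => /eqP <-; rewrite eqxx ?orbT. Qed.

Lemma c_side_same (V W : finType) (src dst : W -> V) c x y0 :
  c.1 != y0 -> touches (csrc src) (cdst dst) c x ->
  (y0 \in x.2) = (y0 \in (csrc src c).2).
Proof.
move=> Hc; rewrite /touches /csrc /cdst; case/orP => /eqP <- //=.
by rewrite tog_in eq_sym (negbTE Hc).
Qed.

Lemma c_side_diff (V W : finType) (src dst : W -> V) c x p :
  touches (csrc src) (cdst dst) c x -> touches (csrc src) (cdst dst) c p -> x != p ->
  (c.1 \in x.2) != (c.1 \in p.2).
Proof.
rewrite /touches /csrc /cdst.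
case/orP => /eqP <-; case/orP => /eqP <-; rewrite ?eqxx //= => _;
  by rewrite tog_in eqxx ?negbK; case: (_ \in _).
Qed.

Lemma c_regk (V W : finType) (src dst : W -> V) k :
  loopless src dst -> regk src dst k -> regk (csrc src) (cdst dst) k.
Proof.
move=> nl rk [v X]; rewrite -(rk v).
have E : [set c.1 | c in [set c | touches (csrc src) (cdst dst) c (v, X)]] =
         [set y | touches src dst y v].
  apply/setP => y; rewrite inE; apply/imsetP/idP.
    by case=> c; rewrite inE => /c_touch_fst /= H ->.
  move=> Hy; case: (boolP (src y == v)) => Hs.
    by exists (y, X) => //; rewrite inE /touches /csrc /= (eqP Hs) eqxx.
  exists (y, tog X y) => //; rewrite inE /touches /cdst /= togK.
  by move: Hy; rewrite /touches (negbTE Hs) /= => /eqP ->; rewrite eqxx orbT.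
rewrite -E card_in_imset //.
by move=> c c'; rewrite !inE => H1 H2 E'; apply: (c_uniq nl E' H1 H2).
Qed.

Lemma c_Q2 (V W : finType) (src dst : W -> V) g :
  loopless src dst -> Q1 src dst g -> Q2 (csrc src) (cdst dst) (2 * g + 1).
Proof.
move=> nl q1.
pose cs := csrc src; pose cd := cdst dst.
suff main : forall m (S : {set W * {set W}}), #|S| <= m -> 0 < #|S| <= 2 * g + 1 ->
   1 < #|[set v | gdeg cs cd S v == 1]| by move=> S; apply: (main #|S|).
elim=> [|m IH] S Hm; first by move: Hm; rewrite leqn0 => /eqP ->.
move=> /andP [HS0 HSg].
pose F := [set c.1 | c in S].
pose mult y := #|[set c in S | c.1 == y]|.
case: (boolP [exists y in F, mult y == 1]).
- case/exists_inP => y0 Fy0 /cards1P [c0 Hc0].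
  have c0S : c0 \in S by have := eqset Hc0 c0; rewrite !inE eqxx => /andP [].
  have c0y : c0.1 = y0 by have := eqset Hc0 c0; rewrite !inE eqxx => /andP [_ /eqP].
  have uniq0 : forall c, c \in S -> c.1 = y0 -> c = c0.
    by move=> c cS cy; have := eqset Hc0 c; rewrite !inE cS cy eqxx /= => /esym/eqP.
  have side_leaf : forall p, touches cs cd c0 p ->
      exists x, (gdeg cs cd S x == 1) && ((y0 \in x.2) == (y0 \in p.2)).
    move=> p Hp.
    case: (eqVneq (gdeg cs cd S p) 1) => Hdp; first by exists p; rewrite Hdp !eqxx.
    have : 1 < gdeg cs cd S p.
      have : 0 < gdeg cs cd S p by apply/card_gt0P; exists c0; rewrite inE c0S Hp.
      by move: Hdp; case: (gdeg _ _ _ _) => [|[|]].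
    case/card_gt1P => c1 [c2 [H1 H2 H12]].
    have [c [cS cp cne]] : exists c, [/\ c \in S, touches cs cd c p & c != c0].
      case: (eqVneq c1 c0) => E.
        by exists c2; move: H2; rewrite inE => /andP [? ?]; split => //; rewrite -E eq_sym.
      by exists c1; move: H1; rewrite inE => /andP [? ?]; split.
    pose s := y0 \in p.2.
    pose Ss := [set c in S | (c != c0) && ((y0 \in (cs c).2) == s)].
    have cne1 : forall c, c \in S -> c != c0 -> c.1 != y0.
      by move=> c' c'S; apply: contra => /eqP E; apply/eqP; apply: uniq0.
    have cSs : c \in Ss.
      by rewrite inE cS cne /= /s (c_side_same (cne1 _ cS cne) cp).
    have SsS : Ss \subset S by apply/subsetP => z; rewrite inE => /andP [].
    have Sslt : #|Ss| < #|S|.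
      apply: proper_card; rewrite properE SsS /=; apply/subsetPn; exists c0 => //.
      by rewrite inE eqxx andbF.
    have := IH Ss (ltnSE (leq_trans Sslt Hm)).
    have -> : 0 < #|Ss| <= 2 * g + 1.
      by apply/andP; split; [apply/card_gt0P; exists c | exact: leq_trans (ltnW Sslt) HSg].
    move=> /(_ isT) /card_gt1P [x1 [x2 [Hx1 Hx2 Hx12]]].
    have [x [Hx Hxp]] : exists x, x \in [set v | gdeg cs cd Ss v == 1] /\ x != p.
      case: (eqVneq x1 p) => E; last by exists x1.
      by exists x2; split => //; rewrite -E eq_sym.
    move: Hx; rewrite inE => Hx; have Hx' := Hx.
    move: Hx'; rewrite /gdeg => /cards1P [c1' Hc1'].
    have c1'S : c1' \in Ss by have := eqset Hc1' c1'; rewrite !inE eqxx => /andP [].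
    have c1'x : touches cs cd c1' x by have := eqset Hc1' c1'; rewrite !inE eqxx => /andP [].
    move: c1'S; rewrite inE => /and3P [c1'S c1'ne /eqP c1's].
    have sx : (y0 \in x.2) = s by rewrite (c_side_same (cne1 _ c1'S c1'ne) c1'x).
    exists x; rewrite sx eqxx andbT -(eqP Hx) /gdeg; apply/eqP; apply: eq_card => z.
    rewrite !inE; case: (boolP (z \in S)) => //= zS.
    case: (boolP (touches cs cd z x)) => zx; rewrite ?andbF //.
    have zne : z != c0.
      apply/eqP => E; subst z.
      have := c_side_diff zx Hp Hxp; by rewrite c0y sx /s eqxx.
    by rewrite zne /= -(c_side_same (cne1 _ zS zne) zx) sx eqxx.
  have Hs : touches cs cd c0 (cs c0) by rewrite /touches eqxx.
  have Hd : touches cs cd c0 (cd c0) by rewrite /touches eqxx orbT.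
  case: (side_leaf _ Hs) => x1 /andP [Hx1 /eqP s1].
  case: (side_leaf _ Hd) => x2 /andP [Hx2 /eqP s2].
  apply: (@two_in _ _ x1 x2); rewrite ?inE //.
  apply/eqP => E; subst x2; move: s2; rewrite s1 /cs /cd /csrc /cdst /= tog_in c0y eqxx.
  by case: (_ \in _).
- rewrite negb_exists => /forallP Hall.
  have m2 : forall y, y \in F -> 1 < mult y.
    move=> y Fy; have := Hall y; rewrite Fy /= => H.
    have : 0 < mult y.
      by case/imsetP: Fy => c cS ->; apply/card_gt0P; exists c; rewrite inE cS eqxx.
    by move: H; case: (mult y) => [|[|]].
  have sumS : #|S| = \sum_(y in F) mult y.
    have -> : #|S| = \sum_(c in S) 1 by rewrite sum1_card.
    rewrite (partition_big_imset fst) /=; apply: eq_bigr => y _.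
    by rewrite /mult -sum1_card; apply: eq_bigl => c; rewrite inE.
  have Fg : #|F| <= g.
    have : \sum_(y in F) 2 <= #|S| by rewrite sumS; apply: leq_sum => y Fy; exact: m2.
    rewrite sum_nat_const => H; move: (leq_trans H HSg); lia.
  have F0 : 0 < #|F|.
    by case/card_gt0P: HS0 => c cS; apply/card_gt0P; exists c.1; apply: imset_f.
  have [v Hv] := q1 F (introT andP (conj F0 Fg)).
  move: Hv => /eqP; rewrite /gdeg => /cards1P [y1 Hy1].
  have y1F : y1 \in F by have := eqset Hy1 y1; rewrite !inE eqxx => /andP [].
  have y1v : touches src dst y1 v by have := eqset Hy1 y1; rewrite !inE eqxx => /andP [].
  have uniqF : forall y, y \in F -> touches src dst y v -> y = y1.
    by move=> y yF yv; have := eqset Hy1 y; rewrite !inE yF yv /= => /esym/eqP.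
  have := m2 _ y1F => /card_gt1P [c1 [c2 [H1 H2 H12]]].
  move: H1 H2; rewrite !inE => /andP [c1S /eqP c1y] /andP [c2S /eqP c2y].
  pose ep c := if src y1 == v then cs c else cd c.
  have ep_t : forall c, c.1 = y1 -> touches cs cd c (ep c).
    by move=> c _; rewrite /ep /touches; case: ifP => _; rewrite eqxx ?orbT.
  have ep_1 : forall c, c.1 = y1 -> (ep c).1 = v.
    move=> c cy; rewrite /ep /cs /cd /csrc /cdst cy; case: ifP => [/eqP //|H] /=.
    by move: y1v; rewrite /touches H => /eqP.
  have leaf : forall c, c \in S -> c.1 = y1 -> gdeg cs cd S (ep c) == 1.
    move=> c cS cy; apply/cards1P; exists c; apply/setP => z; rewrite !inE.
    apply/andP/eqP => [[zS zt]|->]; last by rewrite cS ep_t.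
    apply: (c_uniq nl _ zt (ep_t _ cy)); rewrite cy.
    apply: uniqF; first by apply: imset_f.
    by have := c_touch_fst zt; rewrite ep_1.
  apply: (@two_in _ _ (ep c1) (ep c2)); rewrite ?inE ?leaf //.
  apply: contra H12 => /eqP E; apply/eqP.
  by apply: (c_uniq nl _ (ep_t _ c1y)); rewrite ?c1y ?c2y // E ep_t.
Qed.

Lemma graph_exists k t : exists (V W : finType) (src dst : W -> V),
  [/\ loopless src dst, regk src dst k, Q2 src dst t & 0 < #|V| ].
Proof.
elim: t => [|t IHt].
  exists (bool : finType), ('I_k : finType), (fun _ => false), (fun _ => true); split => //.
  - move=> v; rewrite (_ : [set y | _] = setT) ?cardsT ?card_ord //.
    by apply/setP => y; rewrite !inE /touches; case: v.
  - by move=> S /andP [H1 H2]; move: (leq_trans H1 H2).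
  - by rewrite card_bool.
have [V [W [src [dst [nl rk q2 V0]]]]] := IHt.
exists ((V * {set W})%type : finType), ((W * {set W})%type : finType),
  (csrc src), (cdst dst); split.
- exact: c_loopless.
- exact: c_regk.
- apply: (@Q2mono _ _ _ _ t.+1 (2 * t + 1)); first lia.
  by apply: c_Q2 => //; apply: Q2Q1.
- case/card_gt0P: V0 => v _; apply/card_gt0P; by exists (v, set0).
Qed.

Definition unif (W : finType) k (F : {set {set W}}) := forall f, f \in F -> #|f| = k.
Definition good (W : finType) k (F : {set {set W}}) :=
  forall S : {set W}, 0 < #|S| <= k -> exists2 f, f \in F & #|S :&: f| = 1.
Definition mapH (W W' : finType) (h : W -> W') (F : {set {set W}}) : {set {set W'}} :=
  [set h @: (f : {set W}) | f in F].

Lemma mapH_unif (W W' : finType) (h : W -> W') k F :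
  injective h -> unif k F -> unif k (mapH h F).
Proof. by move=> hi u f' /imsetP [f fF ->]; rewrite card_imset // u. Qed.

Lemma mapH_card (W W' : finType) (h : W -> W') F : #|mapH h F| <= #|F|.
Proof. exact: leq_imset_card. Qed.

Lemma preim_card (W W' : finType) (h : W -> W') (S' : {set W'}) :
  injective h -> #|h @^-1: S'| <= #|S'|.
Proof.
move=> hi; rewrite -(card_imset _ hi); apply: subset_leq_card.
by apply/subsetP => y /imsetP [x]; rewrite inE => Hx ->.
Qed.

Lemma mapH_good (W W' : finType) (h : W -> W') k F (S' : {set W'}) :
  injective h -> good k F -> 0 < #|h @^-1: S'| <= k ->
  exists2 f', f' \in mapH h F & #|S' :&: f'| = 1.
Proof.
move=> hi g HS; have [f fF Hf] := g _ HS.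
exists (h @: f); first by apply: imset_f.
rewrite -Hf -(card_imset _ hi); apply: eq_card => y; rewrite !inE.
apply/andP/imsetP.
  case=> yS /imsetP [x xf Ey]; exists x => //; by rewrite !inE -Ey yS xf.
case=> x; rewrite !inE => /andP [xS xf] ->; by rewrite xS imset_f.
Qed.

Definition cp (W : finType) (a : nat) (F : {set {set W}}) : {set {set ('I_a * W)}} :=
  [set (fun x : W => (p.1, x)) @: (p.2 : {set W}) | p in setX [set: 'I_a] F].

Lemma cp_card (W : finType) a (F : {set {set W}}) : #|cp a F| <= a * #|F|.
Proof. by apply: leq_trans (leq_imset_card _ _) _; rewrite cardsX cardsT card_ord. Qed.

Lemma pair_inj (A B : Type) (i : A) : injective (fun x : B => (i, x)).
Proof. by move=> x y []. Qed.

Lemma cp_unif (W : finType) a k (F : {set {set W}}) : unif k F -> unif k (cp a F).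
Proof.
move=> u f' /imsetP [[i f]]; rewrite inE /= => /andP [_ fF] ->.
by rewrite card_imset ?u //; apply: pair_inj.
Qed.

Lemma cp_good (W : finType) a k (F : {set {set W}}) : good k F -> good k (cp a F).
Proof.
move=> g S /andP [S0 Sk]; case/card_gt0P: S0 => [[i x] Hx].
have Hc : 0 < #|(fun y : W => (i, y)) @^-1: S| <= k.
  apply/andP; split.
    by apply/card_gt0P; exists x; rewrite inE.
  exact: leq_trans (preim_card _ (@pair_inj _ _ i)) Sk.
have [f' f'F Hf'] := @mapH_good _ _ (fun y : W => (i, y)) k F S (@pair_inj _ _ i) g Hc.
exists f' => //.
move: f'F => /imsetP [f fF Ef]; rewrite Ef.
rewrite /cp; apply/imsetP; exists (i, f); [by rewrite !inE /= fF | by []].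
Qed.

Definition sm (W1 W2 : finType) (F1 : {set {set W1}}) (F2 : {set {set W2}}) :
  {set {set (W1 + W2)}} := mapH inl F1 :|: mapH inr F2.

Lemma sm_card (W1 W2 : finType) (F1 : {set {set W1}}) (F2 : {set {set W2}}) :
  #|sm F1 F2| <= #|F1| + #|F2|.
Proof.
apply: leq_trans (leq_card_setU _ _) _; apply: leq_add; exact: mapH_card.
Qed.

Lemma sm_unif (W1 W2 : finType) k (F1 : {set {set W1}}) (F2 : {set {set W2}}) :
  unif k F1 -> unif k F2 -> unif k (sm F1 F2).
Proof.
move=> u1 u2 f; rewrite inE => /orP [] Hf.
  by apply: (@mapH_unif _ _ inl k F1) => //; move=> x y [].
by apply: (@mapH_unif _ _ inr k F2) => //; move=> x y [].
Qed.

Lemma sm_good (W1 W2 : finType) k (F1 : {set {set W1}}) (F2 : {set {set W2}}) :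
  good k F1 -> good k F2 -> good k (sm F1 F2).
Proof.
move=> g1 g2 S /andP [S0 Sk]; case/card_gt0P: S0 => [[x|x] Hx].
  have inj : injective (@inl W1 W2) by move=> ? ? [].
  have Hc : 0 < #|inl @^-1: S| <= k.
    apply/andP; split; first by apply/card_gt0P; exists x; rewrite inE.
    exact: leq_trans (preim_card _ inj) Sk.
  have [f' f'F Hf'] := @mapH_good _ _ inl k F1 S inj g1 Hc.
  by exists f' => //; rewrite inE f'F.
have inj : injective (@inr W1 W2) by move=> ? ? [].
have Hc : 0 < #|inr @^-1: S| <= k.
  apply/andP; split; first by apply/card_gt0P; exists x; rewrite inE.
  exact: leq_trans (preim_card _ inj) Sk.
have [f' f'F Hf'] := @mapH_good _ _ inr k F2 S inj g2 Hc.
by exists f' => //; rewrite inE f'F orbT.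
Qed.

Lemma card_sumb (T : finType) (P : pred T) : #|[set y | P y]| = \sum_y (P y : nat).
Proof.
rewrite -sum1_card big_mkcond /=; apply: eq_bigr => y _; rewrite inE; by case: (P y).
Qed.

Lemma handshake (V W : finType) (src dst : W -> V) k :
  loopless src dst -> regk src dst k -> k * #|V| = 2 * #|W|.
Proof.
move=> nl rk.
have -> : k * #|V| = \sum_(v : V) #|[set y | touches src dst y v]|.
  rewrite (eq_bigr (fun _ => k)); last by move=> v _; rewrite rk.
  by rewrite sum_nat_const cardT mulnC.
have -> : 2 * #|W| = \sum_(y : W) #|[set v | touches src dst y v]|.
  rewrite (eq_bigr (fun _ => 2)); last first.
    move=> y _; rewrite (_ : [set v | _] = [set src y; dst y]) ?cards2 ?nl //.
    by apply/setP => v; rewrite !inE /touches ![_ == v]eq_sym.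
  by rewrite sum_nat_const cardT mulnC.
under eq_bigr do rewrite card_sumb.
rewrite exchange_big /=; apply: eq_bigr => y _; by rewrite card_sumb.
Qed.

Lemma block1 (V W : finType) (src dst : W -> V) k :
  regk src dst k -> Q1 src dst k ->
  exists F : {set {set W}}, [/\ unif k F, good k F & #|F| <= #|V|].
Proof.
move=> rk q1; exists [set [set y | touches src dst y v] | v : V]; split.
- by move=> f /imsetP [v _ ->]; rewrite rk.
- move=> S HS; have [v Hv] := q1 S HS.
  exists [set y | touches src dst y v]; first exact: imset_f.
  by rewrite -Hv /gdeg setIdE.
- exact: leq_imset_card.
Qed.

Lemma card_opt (W : finType) (P : pred (option W)) :
  #|[set z | P z]| = P None + #|[set y | P (Some y)]|.
Proof.
rewrite (cardsD1 None) inE; congr (_ + _).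
rewrite (_ : [set z | P z] :\ None = Some @: [set y | P (Some y)]).
  by rewrite card_imset //; exact: Some_inj.
apply/setP => z; case: z => [y|]; rewrite !inE /=.
  by rewrite (mem_imset _ _ (@Some_inj _)) inE.
by apply/esym/negbTE/imsetP => [[y _]].
Qed.

Lemma card_D1 (W : finType) (Q : pred W) y0 :
  #|[set y | Q y]| = Q y0 + #|[set y | Q y] :\ y0|.
Proof. by rewrite (cardsD1 y0) inE. Qed.

Lemma setD1_ext (W : finType) (Q Q' : pred W) y0 :
  (forall y, y != y0 -> Q y = Q' y) -> [set y | Q y] :\ y0 = [set y | Q' y] :\ y0.
Proof.
move=> H; apply/setP => y; rewrite !inE; case: (eqVneq y y0) => //= ne; exact: H.
Qed.

Lemma block2 (V W : finType) (src dst : W -> V) k :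
  0 < k -> 0 < #|V| -> loopless src dst -> regk src dst k -> Q2 src dst k ->
  exists F : {set {set option W}}, [/\ unif k F, good k F & #|F| <= #|V|].
Proof.
move=> k0 V0 nl rk q2.
have [y0 _] : exists y0, y0 \in [set: W].
  case/card_gt0P: V0 => v _; have : 0 < #|[set y | touches src dst y v]| by rewrite rk.
  by case/card_gt0P => y _; exists y; rewrite inE.
pose a := src y0; pose b := dst y0.
have ab : (b == a) = false by apply/negbTE; rewrite eq_sym; exact: nl.
pose src2 (z : option W) := if z is Some y then src y else b.
pose dst2 (z : option W) := if z is Some y then (if y == y0 then a else dst y) else b.
pose t2 z v := touches src2 dst2 z v.
have t2N : forall v, t2 None v = (b == v) by move=> v; rewrite /t2 /touches /= orbb.
have t2S0 : forall v, t2 (Some y0) v = (a == v) by move=> v; rewrite /t2 /touches /= eqxx orbb.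
have t2S : forall y v, y != y0 -> t2 (Some y) v = touches src dst y v.
  by move=> y v ne; rewrite /t2 /touches /= (negbTE ne).
have t0 : forall v, touches src dst y0 v = (a == v) || (b == v) by [].
exists [set [set z | t2 z v] | v : V]; split.
- move=> f /imsetP [v _ ->]; rewrite card_opt t2N (card_D1 _ y0) t2S0 -(rk v) (card_D1 _ y0) t0.
  rewrite (@setD1_ext _ _ (fun y => touches src dst y v)); last by move=> y ne; rewrite t2S.
  case: (eqVneq a v) => [<-|av]; first by rewrite ab.
  by case: (b == v).
- move=> S /andP [S0 Sk].
  pose al := Some y0 \in S; pose be := None \in S.
  pose R0 := #|[set y | Some y \in S] :\ y0|.
  have cS : #|S| = be + (al + R0).
    rewrite -[S in LHS](_ : [set z | z \in S] = S); last by apply/setP => z; rewrite inE.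
    by rewrite card_opt (card_D1 _ y0).
  pose T := [set y | (Some y \in S) || ((y == y0) && be)].
  have cT : #|T| = (al || be) + R0.
    rewrite (card_D1 _ y0) eqxx andTb; congr (_ + _).
    by rewrite /R0 (@setD1_ext _ _ (fun y => Some y \in S)) // => y ne; rewrite (negbTE ne) orbF.
  have T0 : 0 < #|T| <= k.
    apply/andP; split; move: S0 Sk; rewrite cT cS; case: (al); case: (be) => /=; lia.
  have := q2 T T0 => /card_gt1P [u1 [u2 [Hu1 Hu2 u12]]].
  move: Hu1 Hu2; rewrite !inE => /eqP Hu1 /eqP Hu2.
  pose R v := #|[set y | (Some y \in S) && touches src dst y v] :\ y0|.
  have dT : forall v, gdeg src dst T v = ((al || be) && ((a == v) || (b == v))) + R v.
    move=> v; rewrite /gdeg.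
    rewrite (card_D1 _ y0) inE eqxx andTb t0; congr (_ + _).
    rewrite /R (@setD1_ext _ _ (fun y => (Some y \in S) && touches src dst y v)) // => y ne.
    by rewrite inE (negbTE ne) orbF.
  have cnt : forall v, #|S :&: [set z | t2 z v]| = (be && (b == v)) + ((al && (a == v)) + R v).
    move=> v; rewrite -setIdE.
    rewrite card_opt t2N (card_D1 _ y0) t2S0; congr (_ + (_ + _)).
    rewrite /R (@setD1_ext _ _ (fun y => (Some y \in S) && touches src dst y v)) // => y ne.
    by rewrite t2S.
  suff [v Hv] : exists v, #|S :&: [set z | t2 z v]| = 1.
    by exists [set z | t2 z v] => //; apply: imset_f.
  case: (boolP ((u1 != a) && (u1 != b))) => [/andP [n1 n2]|H1].
    exists u1; rewrite cnt -Hu1 dT ![_ == u1]eq_sym (negbTE n1) (negbTE n2).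
    by rewrite !andbF.
  case: (boolP ((u2 != a) && (u2 != b))) => [/andP [n1 n2]|H2].
    exists u2; rewrite cnt -Hu2 dT ![_ == u2]eq_sym (negbTE n1) (negbTE n2).
    by rewrite !andbF.
  have [da db] : gdeg src dst T a = 1 /\ gdeg src dst T b = 1.
    have E1 : (u1 == a) || (u1 == b) by move: H1; case: (u1 == a); case: (u1 == b).
    have E2 : (u2 == a) || (u2 == b) by move: H2; case: (u2 == a); case: (u2 == b).
    case/orP: E1 => /eqP E1; case/orP: E2 => /eqP E2; rewrite E1 E2 in u12 Hu1 Hu2.
    - by rewrite eqxx in u12.
    - by split.
    - by split.
    - by rewrite eqxx in u12.
  move: da db; rewrite !dT !eqxx ?orbT /= ?ab.
  case Hal: (al); case Hbe: (be) => /= da db.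
  + by exists a; rewrite cnt Hal Hbe eqxx ?ab /=; lia.
  + by exists a; rewrite cnt Hal Hbe eqxx ?ab /=; lia.
  + by exists b; rewrite cnt Hal Hbe eqxx ?ab /=; lia.
  + by exists a; rewrite cnt Hal Hbe eqxx ?ab /=; lia.
- exact: leq_imset_card.
Qed.

Lemma bigmin_le (T : eqType) (s : seq T) (P : pred T) (F : T -> nat) x i0 :
  i0 \in s -> P i0 -> \big[minn/x]_(i <- s | P i) F i <= F i0.
Proof.
elim: s => [//|a s IH]; rewrite inE big_cons => /orP [/eqP <-|H] Pi0.
  by rewrite Pi0 geq_minl.
case: (P a); last exact: IH.
by apply: leq_trans (geq_minr _ _) (IH H Pi0).
Qed.

Lemma wsat_le k n (E0 : {set {set 'I_n}}) :
  kuniform k E0 -> Bk_semisat k E0 -> wsat_Bk k n <= #|E0|.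
Proof.
by move=> u s; rewrite /wsat_Bk; apply: bigmin_le; rewrite ?mem_index_enum ?u ?s.
Qed.

Lemma to_In k n (W : finType) (F : {set {set W}}) :
  0 < k -> #|W| = n -> unif k F -> good k F -> wsat_Bk k n <= #|F|.
Proof.
move=> k0 Hn u g.
pose h := fun w : W => cast_ord Hn (enum_rank w).
have hi : injective h by move=> x y /cast_ord_inj /enum_rank_inj.
have hs : forall y, exists x, h x = y.
  move=> y; exists (enum_val (cast_ord (esym Hn) y)).
  by rewrite /h enum_valK cast_ordKV.
apply: leq_trans (wsat_le (E0 := mapH h F) _ _) (mapH_card _ _).
  apply/forall_inP => f Hf; apply/eqP; exact: (mapH_unif hi u).
apply/forallP => e; apply/implyP => /andP [/eqP ek _].
have [f' Hf' Hc] : exists2 f', f' \in mapH h F & #|e :&: f'| = 1.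
  apply: (@mapH_good _ _ h k F e hi g); apply/andP; split.
    have : 0 < #|e| by rewrite ek.
    case/card_gt0P => y ye; have [x hx] := hs y.
    by apply/card_gt0P; exists x; rewrite inE hx.
  by rewrite -ek; apply: preim_card.
by apply/exists_inP; exists f' => //; rewrite Hc.
Qed.

Lemma lb k n (E : {set {set 'I_n}}) :
  0 < k -> kuniform k E -> Bk_semisat k E -> n < k + k * #|E|.
Proof.
move=> k0 /forall_inP u /forallP s; rewrite ltnNge; apply/negP => H.
have hc : #|cover E| <= k * #|E|.
  apply: leq_trans (leq_card_cover E).1 _.
  rewrite (eq_bigr (fun _ => k)); last by move=> f /u /eqP.
  by rewrite sum_nat_const mulnC.
have : k <= #|~: cover E|.
  have := cardsC (cover E); rewrite card_ord => HC; lia.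
case/card_geqP => sq [usq ssq subs].
pose e := [set x in sq].
have ek : #|e| = k by rewrite cardsE (card_uniqP usq).
have notin : forall x, x \in e -> forall f, f \in E -> x \notin f.
  move=> x; rewrite inE => /subs; rewrite inE => Hx f fE; apply: contra Hx => xf.
  by apply/bigcupP; exists f.
have : (#|e| == k) && (e \notin E).
  rewrite ek eqxx /=; apply/negP => eE.
  have : 0 < #|e| by rewrite ek.
  by case/card_gt0P => x xe; move: (notin x xe e eE); rewrite xe.
move/(implyP (s e)) => /exists_inP [f fE /eqP Hc].
have : 0 < #|e :&: f| by rewrite Hc.
case/card_gt0P => x; rewrite inE => /andP [xe xf].
by move: (notin x xe f fE); rewrite xf.
Qed.

Lemma complete_ok k n : kuniform k (complete_kgraph k n) /\ Bk_semisat k (complete_kgraph k n).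
Proof.
split; first by apply/forall_inP => f; rewrite inE.
apply/forallP => e; apply/implyP => /andP [ek]; by rewrite inE ek.
Qed.

Lemma wsat_lb k n : 0 < k -> n < k + k * wsat_Bk k n.
Proof.
move=> k0; rewrite /wsat_Bk.
apply: (big_ind (fun x => n < k + k * x)).
- by have [u s] := complete_ok k n; apply: lb.
- by move=> x y Hx Hy /=; rewrite /minn; case: ifP.
- by move=> E /andP [u s]; apply: lb.
Qed.

Lemma wsat_ub k : 0 < k -> exists N, forall n, N <= n -> k * wsat_Bk k n <= 2 * n.
Proof.
move=> k0.
have [V [W [src [dst [nl rk q2 V0]]]]] := graph_exists k k.
have [F1 [u1 g1 c1]] := block1 rk (Q2Q1 q2).
have [F2 [u2 g2 c2]] := block2 k0 V0 nl rk q2.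
have hs := handshake nl rk.
set L := #|W|; set M := #|V|.
have L0 : 0 < L.
  have : 0 < k * M by rewrite muln_gt0 k0 V0.
  rewrite hs; lia.
exists (L * L) => n Hn.
pose q := n %/ L; pose r := n %% L.
have nqr : n = q * L + r by rewrite /q /r -divn_eq.
have rL : r < L by rewrite /r ltn_mod.
have Lq : L <= q by rewrite /q leq_divRL.
pose Wt := (('I_(q - r) * W) + ('I_r * option W))%type.
pose Ft := sm (cp (q - r) F1) (cp r F2).
have cW : #|{: Wt}| = n.
  rewrite card_sum !card_prod !card_ord card_option -/L nqr.
  have : r <= q by lia.
  move=> rq; rewrite mulnS; lia.
have := to_In k0 cW (sm_unif (@cp_unif _ (q - r) k F1 u1) (@cp_unif _ r k F2 u2))
  (sm_good (@cp_good _ (q - r) k F1 g1) (@cp_good _ r k F2 g2)).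
move=> Hw.
have cF : #|Ft| <= q * M.
  apply: leq_trans (sm_card _ _) _.
  apply: leq_trans (leq_add (cp_card _ _) (cp_card _ _)) _.
  apply: leq_trans (leq_add (leq_mul (leqnn _) c1) (leq_mul (leqnn _) c2)) _.
  rewrite -mulnDl; apply: leq_mul => //; lia.
apply: leq_trans (leq_mul (leqnn k) (leq_trans Hw cF)) _.
rewrite mulnCA hs nqr; lia.
Qed.


From mathcomp Require Import all_order all_algebra.
Import Order.TTheory GRing.Theory Num.Theory.
Local Open Scope ring_scope.

Theorem proposition2p1 (k : nat) (hk : (4 <= k)%N) :
  exists (C1 C2 : rat), 0 <= C2 /\
    exists N : nat, forall n : nat, (N <= n)%N ->
      (2 * n%:R) / (k%:R + C2) <= (wsat_Bk k n)%:R /\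
      (wsat_Bk k n)%:R <= (2 * n%:R) / k%:R + C1.
Proof.
have k0 : (0 < k)%N by lia.
have [N HN] := wsat_ub k0.
exists 0, (2 * k)%:R; split; first by rewrite ler0n.
exists (maxn N (3 * k)) => n; rewrite geq_max => /andP [nN n3k]; split.
- have lb := wsat_lb n k0.
  have H : (2 * n <= wsat_Bk k n * (3 * k))%N by nia.
  rewrite ler_pdivrMr; last by rewrite -natrD ltr0n; lia.
  by rewrite -natrD -(natrM _ 2) -natrM ler_nat; lia.
- have H := HN n nN.
  rewrite addr0 ler_pdivlMr; last by rewrite ltr0n.
  by rewrite -(natrM _ 2) -natrM ler_nat; lia.
Qed.
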